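(* Let $d\ge 3$ and let $\mathcal M$ be a model of $\mathrm{PQM}_d$ with domain $\mathbb M$. Then there exists a function $\kappa:\mathbb M\to\mathbb H_d$ such that for all $m\in\mathbb M$ and all $p\in\mathbb H_d$, $$p\in F^{\mathcal M}(m)\iff \kappa(m)\le p,$$ equivalently $[m:p]^{\mathcal M}\iff[\kappa(m):p]^{\mathcal H_d}$. (That is, each $F^{\mathcal M}(m)$ has a least element $\kappa(m)$ and is the principal up-set it generates.)
   Context: Notation. For $d\ge 1$, $\mathbb H_d$ is the set of complex linear subspaces of $\mathbb C^d$, ordered by inclusion $\le$, with $\top=\mathbb C^d$, $\bot=\{0\}$, $p^\bot$ the orthogonal complement, $p\wedge q=p\cap q$ and $p\vee q=p+q$. $\mathbb U_d$ is the set of unitary operators on $\mathbb C^d$, and for $U\in\mathbb U_d$, $p\in\mathbb H_d$, $U(p)=\{Uv: v\in p\}$. The Sasaki projection is $p\,\&\,q := q\cap(q^\bot+p)$. Subspaces $p,q$ are compatible iff $p=(p\wedge q)\vee(p\wedge q^\bot)$. Language $\mathcal L_d$: a first-order language without equality and without constants, having a unary function symbol $u_U$ for each $U\in\mathbb U_d$, a unary function symbol $\pi_q$ for each $q\in\mathbb H_d$, and a unary relation symbol $[\,\cdot:p]$ for each $p\in\mathbb H_d$. Theory $\mathrm{PQM}_d$ (over $\mathcal L_d$) has the following axioms, for all $p,q\in\mathbb H_d$ and $U\in\mathbb U_d$: ($\neg\bot$) $\exists x\,\neg[x:\bot]$; ($\top$) $\forall x\,[x:\top]$; ($\le$) if $p\le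 q$: $\forall x\,([x:p]\to[x:q])$; ($\wedge$) if $p,q$ are compatible: $\forall x\,([x:p]\wedge[x:q]\to[x:p\wedge q])$; ($\pi_i$) $\forall x\,([x:p]\to[\pi_q(x):p\,\&\,q])$; ($\pi_c$) if $p\le q$: $\forall x\,([\pi_p(\pi_q(x)):\bot]\to[\pi_p(x):\bot])$; ($\pi_\bot$) $\forall x\,([\pi_q(x):\bot]\to[x:q^\bot])$; ($u_i$) $\forall x\,([x:p]\to[u_U(x):U(p)])$; ($u_e$) $\forall x\,([u_U(x):p]\to[x:U^{-1}(p)])$. Hilbert model $\mathcal H_d$: the $\mathcal L_d$-structure with domain $\mathbb H_d$, $u_U^{\mathcal H_d}(x)=U(x)$, $\pi_q^{\mathcal H_d}(x)=x\,\&\,q$, and $[x:p]^{\mathcal H_d}$ holds iff $x\le p$. Filter: for an $\mathcal L_d$-structure $\mathcal M$ with domain $\mathbb M$ and $m\in\mathbb M$, $F^{\mathcal M}(m)=\{p\in\mathbb H_d : [m:p]^{\mathcal M}\}$, where $[\,\cdot:p]^{\mathcal M}$ is the interpretation of the relation symbol $[\,\cdot:p]$ in $\mathcal M$. *)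

(* Defs.v *)
From HB Require Import structures.
From mathcomp Require Import all_boot all_order all_algebra.
From mathcomp Require Import complex.
From mathcomp Require Import Rstruct.
Set Implicit Arguments. Unset Strict Implicit. Unset Printing Implicit Defensive.
Import Order.TTheory GRing.Theory Num.Theory.
Local Open Scope ring_scope.

Definition CC : numClosedFieldType := (Rdefinitions.R)[i].

(* Vectors of C^d are row vectors 'rV[CC]_d; a subspace is represented by the
   unique canonical matrix <<A>> generating it (mxalgebra's genmx), so that
   subspaces are a type with Leibniz equality. *)
Definition subsp (d : nat) := {A : 'M[CC]_d | <<A>>%MS == A}.

Lemma genmx_canon (d : nat) (A : 'M[CC]_d) : <<(<<A>>%MS)>>%MS == <<A>>%MS.
Proof. by rewrite genmx_id. Qed.

Definition mkS (d : nat) (A : 'M[CC]_d) : subsp d :=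
  exist _ <<A>>%MS (genmx_canon A).

Definition smx (d : nat) (p : subsp d) : 'M[CC]_d := proj1_sig p.

Definition sle (d : nat) (p q : subsp d) : Prop := (smx p <= smx q)%MS.
Definition stop (d : nat) : subsp d := mkS (1%:M : 'M[CC]_d).
Definition sbot (d : nat) : subsp d := mkS (0 : 'M[CC]_d).
Definition smeet (d : nat) (p q : subsp d) : subsp d := mkS (smx p :&: smx q)%MS.
Definition sjoin (d : nat) (p q : subsp d) : subsp d := mkS (smx p + smx q)%MS.

Definition adj (d : nat) (A : 'M[CC]_d) : 'M[CC]_d := (map_mx Num.conj A)^T.

(* Orthogonal complement w.r.t. <u,v> = sum_i u_i * conj(v_i):
   the row vectors u with u *m adj A = 0 (left kernel of adj A). *)
Definition sperp (d : nat) (p : subsp d) : subsp d := mkS (kermx (adj (smx p))).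

Definition sasaki (d : nat) (p q : subsp d) : subsp d :=
  smeet q (sjoin (sperp q) p).

Definition compatible (d : nat) (p q : subsp d) : Prop :=
  p = sjoin (smeet p q) (smeet p (sperp q)).

(* Unitary operators on C^d (as matrices acting on column vectors). *)
Definition unitary (d : nat) : Type :=
  {U : 'M[CC]_d | U *m adj U == 1%:M}.

Definition umx (d : nat) (U : unitary d) : 'M[CC]_d := proj1_sig U.

(* U(p) = {U v : v in p}; with row vectors v^T, (U v)^T = v^T *m U^T. *)
Definition uimg (d : nat) (U : unitary d) (p : subsp d) : subsp d :=
  mkS (smx p *m (umx U)^T).
Definition uinvimg (d : nat) (U : unitary d) (p : subsp d) : subsp d :=
  mkS (smx p *m (invmx (umx U))^T).

(* L_d-structures: domain, interpretations of u_U, pi_q and [ . : p ]. *)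
Record Lstruct (d : nat) := {
  dom : Type;
  u_ : unitary d -> dom -> dom;
  pi_ : subsp d -> dom -> dom;
  rel_ : dom -> subsp d -> Prop
}.
Arguments dom {d} l.
Arguments u_ {d} l _ _.
Arguments pi_ {d} l _ _.
Arguments rel_ {d} l _ _.

Definition PQM_model (d : nat) (M : Lstruct d) : Prop :=
  (exists x : dom M, ~ rel_ M x (sbot d)) /\
  (forall x : dom M, rel_ M x (stop d)) /\
  (forall p q : subsp d, sle p q -> forall x, rel_ M x p -> rel_ M x q) /\
  (forall p q : subsp d, compatible p q ->
      forall x, rel_ M x p -> rel_ M x q -> rel_ M x (smeet p q)) /\
  (forall p q : subsp d, forall x, rel_ M x p -> rel_ M (pi_ M q x) (sasaki p q)) /\
  (forall p q : subsp d, sle p q ->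
      forall x, rel_ M (pi_ M p (pi_ M q x)) (sbot d) -> rel_ M (pi_ M p x) (sbot d)) /\
  (forall q : subsp d, forall x, rel_ M (pi_ M q x) (sbot d) -> rel_ M x (sperp q)) /\
  (forall (U : unitary d) (p : subsp d) x, rel_ M x p -> rel_ M (u_ M U x) (uimg U p)) /\
  (forall (U : unitary d) (p : subsp d) x, rel_ M (u_ M U x) p -> rel_ M x (uinvimg U p)).

Definition filt (d : nat) (M : Lstruct d) (m : dom M) : subsp d -> Prop :=
  fun p => rel_ M m p.

(* Main.v *)
Require Import Defs.
From HB Require Import structures.
From mathcomp Require Import all_boot all_order all_algebra.
From mathcomp Require Import complex Rstruct.
From mathcomp Require Import ring lra zify.
From Stdlib Require Import Classical ClassicalEpsilon.
Set Implicit Arguments. Unset Strict Implicit. Unset Printing Implicit Defensive.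
Import Order.TTheory GRing.Theory Num.Theory.
Local Open Scope ring_scope.

Definition cadj m n (A : 'M[CC]_(m,n)) : 'M[CC]_(n,m) := (map_mx Num.conj A)^T.
Lemma cadjM m n p (A : 'M[CC]_(m,n)) (B : 'M[CC]_(n,p)) : cadj (A *m B) = cadj B *m cadj A.
Proof. by rewrite /cadj map_mxM trmx_mul. Qed.
Lemma cadjK m n (A : 'M[CC]_(m,n)) : cadj (cadj A) = A.
Proof. by apply/matrixP=> i j; rewrite /cadj !mxE conjCK. Qed.
Lemma cadj0 m n : cadj (0 : 'M[CC]_(m,n)) = 0.
Proof. by apply/matrixP=> i j; rewrite /cadj !mxE conjC0. Qed.
Lemma cadj_eq0 m n (A : 'M[CC]_(m,n)) : (cadj A == 0) = (A == 0).
Proof. apply/eqP/eqP => [h|->]; last exact: cadj0. by rewrite -[A]cadjK h cadj0. Qed.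
Lemma rank_cadj m n (A : 'M[CC]_(m,n)) : \rank (cadj A) = \rank A.
Proof. by rewrite /cadj mxrank_tr mxrank_map. Qed.

Lemma mx_adj_eq0 m n (A : 'M[CC]_(m,n)) : A *m cadj A = 0 -> A = 0.
Proof.
move=> h; apply/matrixP => i j; have := congr1 (fun M : 'M[CC]_m => M i i) h.
rewrite !mxE => /eqP; rewrite psumr_eq0 => [/allP H|k _]; last first.
  by rewrite /cadj !mxE -normCK exprn_ge0.
have := H j (mem_index_enum _); rewrite /cadj !mxE -normCK expf_eq0 /= normr_eq0.
by move/eqP.
Qed.

Lemma ortho_sym m1 m2 n (A : 'M[CC]_(m1,n)) (B : 'M[CC]_(m2,n)) :
  (A *m cadj B == 0) = (B *m cadj A == 0).
Proof. by rewrite -cadj_eq0 cadjM cadjK. Qed.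

Definition perpm m n (A : 'M[CC]_(m,n)) : 'M[CC]_n := kermx (cadj A).

Lemma sub_perp m1 m2 n (A : 'M[CC]_(m1,n)) (B : 'M[CC]_(m2,n)) :
  (B <= perpm A)%MS = (B *m cadj A == 0).
Proof. exact: sub_kermx. Qed.

Lemma perp_sym m1 m2 n (A : 'M[CC]_(m1,n)) (B : 'M[CC]_(m2,n)) :
  (B <= perpm A)%MS = (A <= perpm B)%MS.
Proof. by rewrite !sub_perp ortho_sym. Qed.

Lemma rank_perp m n (A : 'M[CC]_(m,n)) : \rank (perpm A) = (n - \rank A)%N.
Proof. by rewrite /perpm mxrank_ker rank_cadj. Qed.

Lemma perp_cap0 m1 m2 n (A : 'M[CC]_(m1,n)) (B : 'M[CC]_(m2,n)) :
  (B <= A)%MS -> (B <= perpm A)%MS -> B = 0.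
Proof.
move=> /submxP[D ->]; rewrite sub_perp => /eqP h; apply: mx_adj_eq0.
by rewrite cadjM mulmxA h mul0mx.
Qed.

Lemma perpS m1 m2 n (A : 'M[CC]_(m1,n)) (B : 'M[CC]_(m2,n)) :
  (A <= B)%MS -> (perpm B <= perpm A)%MS.
Proof. by move=> sAB; rewrite perp_sym (submx_trans sAB) // -perp_sym. Qed.

Lemma perp_eqmx m1 m2 n (A : 'M[CC]_(m1,n)) (B : 'M[CC]_(m2,n)) :
  (A :=: B)%MS -> (perpm A :=: perpm B)%MS.
Proof. by move=> e; apply/eqmxP; rewrite !perpS ?e. Qed.

Lemma capperp0 m n (A : 'M[CC]_(m,n)) : (A :&: perpm A = 0)%MS.
Proof. by apply: (@perp_cap0 _ _ _ A); [exact: capmxSl | exact: capmxSr]. Qed.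

Lemma perpK m n (A : 'M[CC]_(m,n)) : (perpm (perpm A) :=: A)%MS.
Proof.
apply/eqmxP; apply/andP; split; last by rewrite -perp_sym.
have sA : (A <= perpm (perpm A))%MS by rewrite -perp_sym.
rewrite -(mxrank_leqif_sup sA) !rank_perp subKn //.
exact: rank_leq_col.
Qed.

Lemma addperp_full m n (A : 'M[CC]_(m,n)) : (1%:M <= A + perpm A)%MS.
Proof.
rewrite sub1mx /row_full.
have := mxrank_sum_cap A (perpm A); rewrite capperp0 mxrank0 addn0 rank_perp => ->.
by rewrite subnKC ?rank_leq_col.
Qed.

Lemma smxE d (A : 'M[CC]_d) : (smx (mkS A) :=: A)%MS.
Proof. exact: genmxE. Qed.
Lemma mkS_eq d (A B : 'M[CC]_d) : (A == B)%MS -> mkS A = mkS B.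
Proof. by move=> /eqmxP e; apply: val_inj => /=; exact: eq_genmx. Qed.
Lemma smxK d (p : subsp d) : mkS (smx p) = p.
Proof. by apply: val_inj => /=; apply/eqP; case: p. Qed.
Lemma subsp_eq d (p q : subsp d) : (smx p == smx q)%MS -> p = q.
Proof. by move=> e; rewrite -(smxK p) -(smxK q); exact: mkS_eq. Qed.
Lemma smx_perp d (p : subsp d) : (smx (sperp p) :=: perpm (smx p))%MS.
Proof. exact: genmxE. Qed.
Lemma smx_meet d (p q : subsp d) : (smx (smeet p q) :=: smx p :&: smx q)%MS.
Proof. exact: genmxE. Qed.
Lemma smx_join d (p q : subsp d) : (smx (sjoin p q) :=: smx p + smx q)%MS.
Proof. exact: genmxE. Qed.
Lemma smx_bot d : smx (sbot d) = 0.
Proof. exact: genmx0. Qed.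
Lemma smx_sasaki d (p q : subsp d) :
  (smx (sasaki p q) :=: smx q :&: (perpm (smx q) + smx p))%MS.
Proof.
apply: eqmx_trans (smx_meet _ _) _; apply: cap_eqmx => //.
apply: eqmx_trans (smx_join _ _) _; apply: adds_eqmx => //; exact: smx_perp.
Qed.

Lemma orth_compat d (p q : subsp d) :
  (smx p <= perpm (smx q))%MS -> compatible p q /\ smeet p q = sbot d.
Proof.
move=> h.
have e0 : (smx p :&: smx q = 0)%MS.
  by apply: (@perp_cap0 _ _ _ (smx q)); [exact: capmxSr | exact: submx_trans (capmxSl _ _) h].
have hb : smeet p q = sbot d.
  apply: subsp_eq; have -> : smx (sbot d) = (smx p :&: smx q)%MS by rewrite smx_bot e0.
  exact/eqmxP/smx_meet.
split=> //; rewrite /compatible hb; apply: subsp_eq.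
apply/andP; split.
  by rewrite smx_join (submx_trans _ (addsmxSr _ _)) // smx_meet sub_capmx submx_refl smx_perp h.
by rewrite smx_join addsmx_sub smx_bot sub0mx smx_meet capmxSl.
Qed.

Lemma sub_full m1 m2 n (A : 'M[CC]_(m1,n)) (B : 'M[CC]_(m2,n)) :
  (1%:M <= B)%MS -> (A <= B)%MS.
Proof. by move=> h; exact: submx_trans (submx1 _) h. Qed.


Lemma ax_up d (M : Lstruct d) (hM : PQM_model M) x p q :
  rel_ M x p -> (smx p <= smx q)%MS -> rel_ M x q.
Proof. by case: hM => _ [_ [H _]] r s; exact: (H p q s x r). Qed.

Lemma ax_upA d (M : Lstruct d) (hM : PQM_model M) x p (A : 'M[CC]_d) :
  rel_ M x p -> (smx p <= A)%MS -> rel_ M x (mkS A).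
Proof. by move=> r s; apply: (ax_up hM r) => //; rewrite smxE. Qed.

Lemma ax_top d (M : Lstruct d) (hM : PQM_model M) x : rel_ M x (stop d).
Proof. by case: hM => _ [H _]. Qed.

Lemma ax_compat d (M : Lstruct d) (hM : PQM_model M) p q x :
  compatible p q -> rel_ M x p -> rel_ M x q -> rel_ M x (smeet p q).
Proof. by case: hM => _ [_ [_ [H _]]] c r s; exact: (H p q c x r s). Qed.

Lemma ax_pi d (M : Lstruct d) (hM : PQM_model M) p q x :
  rel_ M x p -> rel_ M (pi_ M q x) (sasaki p q).
Proof. by case: hM => _ [_ [_ [_ [H _]]]] r; exact: (H p q x r). Qed.

Lemma ax_pibot d (M : Lstruct d) (hM : PQM_model M) q x :
  rel_ M (pi_ M q x) (sbot d) -> rel_ M x (sperp q).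
Proof. by case: hM => _ [_ [_ [_ [_ [_ [H _]]]]]] r; exact: (H q x r). Qed.

Lemma orth_bot d (M : Lstruct d) (hM : PQM_model M) x p q :
  rel_ M x p -> rel_ M x q -> (smx p <= perpm (smx q))%MS -> rel_ M x (sbot d).
Proof.
move=> rp rq h; have [c e] := orth_compat h.
by rewrite -e; exact: ax_compat.
Qed.

Lemma compat_mx m n (S : 'M[CC]_(m,n)) (Q : 'M[CC]_n) : (perpm Q <= S)%MS ->
  (S <= (S :&: Q) + (S :&: perpm Q))%MS.
Proof.
move=> h.
apply: (submx_trans (_ : S <= perpm Q + (Q :&: S))%MS).
  rewrite (matrix_modl Q h).
  by rewrite sub_capmx submx_refl andbT sub_full // addsmxC addperp_full.
rewrite addsmxC; apply: addsmxS; first by rewrite capmxC.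
by rewrite sub_capmx h submx_refl.
Qed.

Lemma sasaki_closed d (M : Lstruct d) (hM : PQM_model M) x p q :
  rel_ M x p -> rel_ M x q -> rel_ M x (sasaki p q).
Proof.
move=> rp rq.
have rs : rel_ M x (sjoin (sperp q) p) by apply: (ax_up hM rp); rewrite smx_join addsmxSr.
have c : compatible (sjoin (sperp q) p) q.
  rewrite /compatible; apply: subsp_eq; apply/andP; split; last first.
    by rewrite smx_join addsmx_sub !smx_meet !capmxSl.
  set S := sjoin (sperp q) p.
  rewrite (smx_join (smeet S q)).
  apply: (submx_trans (@compat_mx _ _ (smx S) (smx q) _)).
    by rewrite /S smx_join (submx_trans _ (addsmxSl _ _)) // smx_perp.
  by apply: addsmxS; rewrite smx_meet //; apply: capmxS; rewrite ?smx_perp.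
have := ax_compat hM c rs rq.
move=> r; apply: (ax_up hM r).
rewrite smx_meet smx_sasaki capmxC.
by apply: capmxS => //; rewrite smx_join; apply: addsmxS; rewrite ?smx_perp.
Qed.


Definition ip n (u v : 'rV[CC]_n) : CC := (u *m cadj v) 0 0.

Lemma ipE n (u v : 'rV[CC]_n) : ip u v = \sum_i u 0 i * (v 0 i)^*.
Proof. by rewrite /ip mxE; apply: eq_bigr => i _; rewrite /cadj !mxE. Qed.

Lemma ipDl n (u v w : 'rV[CC]_n) : ip (u + v) w = ip u w + ip v w.
Proof. by rewrite /ip mulmxDl mxE. Qed.
Lemma ipZl n k (u w : 'rV[CC]_n) : ip (k *: u) w = k * ip u w.
Proof. by rewrite /ip -scalemxAl mxE. Qed.
Lemma ipC n (u v : 'rV[CC]_n) : ip v u = (ip u v)^*.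
Proof.
rewrite !ipE rmorph_sum; apply: eq_bigr => i _.
by rewrite rmorphM /= conjCK mulrC.
Qed.
Lemma ipDr n (u v w : 'rV[CC]_n) : ip u (v + w) = ip u v + ip u w.
Proof. by rewrite ipC ipDl rmorphD /= -!ipC. Qed.
Lemma ipZr n k (u w : 'rV[CC]_n) : ip u (k *: w) = k^* * ip u w.
Proof. by rewrite ipC ipZl rmorphM /= -ipC. Qed.
Lemma ipNl n (u w : 'rV[CC]_n) : ip (- u) w = - ip u w.
Proof. by rewrite -scaleN1r ipZl mulN1r. Qed.
Lemma ipNr n (u w : 'rV[CC]_n) : ip u (- w) = - ip u w.
Proof. by rewrite -scaleN1r ipZr rmorphN1 mulN1r. Qed.
Lemma ipBl n (u v w : 'rV[CC]_n) : ip (u - v) w = ip u w - ip v w.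
Proof. by rewrite ipDl ipNl. Qed.
Lemma ipBr n (u v w : 'rV[CC]_n) : ip u (v - w) = ip u v - ip u w.
Proof. by rewrite ipDr ipNr. Qed.
Lemma ip0l n (w : 'rV[CC]_n) : ip 0 w = 0.
Proof. by rewrite -(scale0r 0) ipZl mul0r. Qed.

Lemma ip_ge0 n (u : 'rV[CC]_n) : 0 <= ip u u.
Proof. by rewrite ipE sumr_ge0 // => i _; rewrite -normCK exprn_ge0. Qed.

Lemma mx11_eq0 (A : 'M[CC]_1) : (A == 0) = (A 0 0 == 0).
Proof.
apply/eqP/eqP => [->|h]; first by rewrite mxE.
by apply/matrixP => i j; rewrite !ord1 h mxE.
Qed.

Lemma ip_eq0 n (u : 'rV[CC]_n) : (ip u u == 0) = (u == 0).
Proof.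
apply/eqP/eqP => [h|->]; last exact: ip0l.
by apply: mx_adj_eq0; apply/eqP; rewrite mx11_eq0; apply/eqP.
Qed.

Lemma sub_perp_row n (u v : 'rV[CC]_n) : (u <= perpm v)%MS = (ip u v == 0).
Proof. by rewrite sub_perp mx11_eq0. Qed.

Lemma ip_real n (u : 'rV[CC]_n) : (ip u u)^* = ip u u.
Proof. by rewrite -ipC. Qed.


Definition lineS d (u : 'rV[CC]_d) : subsp d := mkS (<<u>>%MS).
Lemma smx_line d (u : 'rV[CC]_d) : (smx (lineS u) :=: u)%MS.
Proof. exact: eqmx_trans (smxE _) (genmxE _). Qed.

Lemma full_rank m n (A : 'M[CC]_(m,n)) : (1%:M <= A)%MS -> \rank A = n.
Proof. by rewrite sub1mx => /eqP. Qed.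

Lemma nonzero_row m n (A : 'M[CC]_(m,n)) : A != 0 -> exists i, row i A != 0.
Proof.
move=> nz; have : ~~ (A <= (0 : 'M_n))%MS by rewrite submx0.
by case/row_subPn => i; rewrite submx0 => h; exists i.
Qed.

Lemma rank_row1 n (u : 'rV[CC]_n) : u != 0 -> \rank u = 1%N.
Proof.
move=> nz; apply/eqP; rewrite eqn_leq rank_leq_row lt0n mxrank_eq0 nz //.
Qed.

Lemma rank1_line m n (A : 'M[CC]_(m,n)) (u : 'rV[CC]_n) :
  (u <= A)%MS -> u != 0 -> (\rank A <= 1)%N -> (A <= u)%MS.
Proof.
move=> sua nz hr; rewrite -(mxrank_leqif_sup sua).
by rewrite eqn_leq mxrankS // (leq_trans hr) // rank_row1.
Qed.

Lemma perp_smx d (K : 'M[CC]_d) : (perpm (smx (sperp (mkS K))) :=: K)%MS.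
Proof.
apply: eqmx_trans (perp_eqmx (smx_perp _)) _.
apply: eqmx_trans (perpK _) _; exact: smxE.
Qed.

Lemma step_from_L1 d (M : Lstruct d) (hM : PQM_model M)
  (L1 : forall y (u v : 'rV[CC]_d), rel_ M y (lineS u) -> rel_ M y (lineS v) ->
          u != 0 -> ~~ (v <= u)%MS -> rel_ M y (sbot d))
  x c e : rel_ M x c -> rel_ M x e ->
  (\rank (smx c :&: smx e) + 1 = \rank (smx c))%N -> rel_ M x (smeet c e).
Proof.
move=> rc re hr.
set K := (smx c :&: smx e)%MS.
set Q := sperp (mkS K).
set y := pi_ M Q x.
have hQ : (smx Q :=: perpm K)%MS.
  exact: eqmx_trans (smx_perp _) (perp_eqmx (smxE _)).
have hPQ := perp_smx K.
set m := (perpm K :&: smx c)%MS.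
set W := (perpm K :&: smx e)%MS.
have hKc : (K <= smx c)%MS by exact: capmxSl.
have hKe : (K <= smx e)%MS by exact: capmxSr.
have rm : rel_ M y (mkS m).
  apply: (ax_upA hM (ax_pi hM Q rc)); rewrite smx_sasaki.
  apply: capmxS; first by rewrite hQ.
  by rewrite addsmx_sub submx_refl andbT hPQ.
have rW : rel_ M y (mkS W).
  apply: (ax_upA hM (ax_pi hM Q re)); rewrite smx_sasaki.
  apply: capmxS; first by rewrite hQ.
  by rewrite addsmx_sub submx_refl andbT hPQ.
have fullK : (1%:M <= K + perpm K)%MS by exact: addperp_full.
have rankm : \rank m = 1%N.
  have := mxrank_sum_cap (perpm K) (smx c).
  rewrite rank_perp (@full_rank _ _ (perpm K + smx c)%MS); last first.
    by apply: submx_trans fullK _; rewrite addsmxC addsmxS.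
  have := rank_leq_col K; rewrite -/m; move: hr; rewrite -/K; lia.
have mW0 : (m :&: W = 0)%MS.
  apply: (@perp_cap0 _ _ _ K).
    rewrite /K sub_capmx; apply/andP; split.
      exact: submx_trans (capmxSl _ _) (capmxSr _ _).
    exact: submx_trans (capmxSr _ _) (capmxSr _ _).
  exact: submx_trans (capmxSl _ _) (capmxSl _ _).
have [i ni] : exists i, row i m != 0.
  by apply: nonzero_row; rewrite -mxrank_eq0 rankm.
set u := row i m.
have ru : rel_ M y (lineS u).
  apply: (ax_up hM rm); rewrite smxE smx_line rank1_line ?row_sub //.
  by rewrite rankm.
have rs := sasaki_closed hM rm rW.
have hs : (smx (sasaki (mkS m) (mkS W)) :=: W :&: (perpm W + m))%MS.
  apply: eqmx_trans (smx_sasaki _ _) _.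
  apply: cap_eqmx; first exact: smxE.
  by apply: adds_eqmx; [apply: perp_eqmx; exact: smxE | exact: smxE].
have rk1 : (\rank (W :&: (perpm W + m)) <= 1)%N.
  have := mxrank_sum_cap W (perpm W + m)%MS.
  rewrite (@full_rank _ _ (W + (perpm W + m))%MS); last first.
    apply: submx_trans (addperp_full W) _; rewrite addsmxS //; exact: addsmxSl.
  have := (mxrank_adds_leqif (perpm W) m).1.
  rewrite rank_perp rankm; have := rank_leq_col W; lia.
have L1y : forall v : 'rV[CC]_d, rel_ M y (lineS v) -> ~~ (v <= u)%MS -> rel_ M y (sbot d).
  by move=> v rv nv; exact: L1 ru rv ni nv.
have rbot : rel_ M y (sbot d).
  have [z0|nz] := eqVneq (W :&: (perpm W + m))%MS 0.
    apply: (ax_up hM rs); rewrite hs z0 smx_bot; exact: submx_refl.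
  have [j nj] := nonzero_row nz.
  apply: (L1y (row j (W :&: (perpm W + m))%MS)).
    apply: (ax_up hM rs); rewrite hs smx_line rank1_line ?row_sub //.
  apply/negP => h; apply: (negP nj); rewrite -submx0.
  rewrite -mW0 sub_capmx (submx_trans h) ?row_sub //=.
  by rewrite (submx_trans (row_sub _ _)) // capmxSl.
have := ax_pibot hM rbot.
move=> r; apply: (ax_up hM r); rewrite smx_perp hPQ. by rewrite smx_meet.
Qed.


Definition projm n (N : 'rV[CC]_n) : 'M[CC]_n :=
  1%:M - (ip N N)^-1 *: (cadj N *m N).

Lemma projmE m n (N : 'rV[CC]_n) (X : 'M[CC]_(m,n)) :
  X *m projm N = X - (ip N N)^-1 *: (X *m cadj N *m N).
Proof. by rewrite /projm mulmxBr mulmx1 -scalemxAr mulmxA. Qed.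

Lemma projm_row n (N z : 'rV[CC]_n) :
  z *m projm N = z - ((ip N N)^-1 * ip z N) *: N.
Proof.
rewrite projmE [z *m cadj N]mx11_scalar mul_scalar_mx scalerA //.
Qed.

Lemma projm_perp m n (N : 'rV[CC]_n) (X : 'M[CC]_(m,n)) :
  (X <= perpm N)%MS -> X *m projm N = X.
Proof. by rewrite sub_perp => /eqP h; rewrite projmE h mul0mx scaler0 subr0. Qed.

Lemma projm_N n (N : 'rV[CC]_n) : N != 0 -> N *m projm N = 0.
Proof.
move=> nz; rewrite projm_row mulVf ?scale1r ?subrr //.
by rewrite ip_eq0.
Qed.

Lemma sasaki_line_bound d (a N : 'rV[CC]_d) : N != 0 ->
  (smx (sasaki (lineS a) (sperp (lineS N))) <= a - ((ip N N)^-1 * ip a N) *: N)%MS.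
Proof.
move=> nz.
set S := smx _.
have hQ : (smx (sperp (lineS N)) :=: perpm N)%MS.
  exact: eqmx_trans (smx_perp _) (perp_eqmx (smx_line _)).
have hPQ : (perpm (smx (sperp (lineS N))) :=: N)%MS.
  exact: eqmx_trans (perp_eqmx hQ) (perpK _).
have hS : (S :=: smx (sperp (lineS N)) :&: (perpm (smx (sperp (lineS N))) + smx (lineS a)))%MS.
  exact: smx_sasaki.
have S1 : (S <= perpm N)%MS by rewrite hS -hQ capmxSl.
have S2 : (S <= N + a)%MS.
  rewrite hS; apply: submx_trans (capmxSr _ _) _.
  by apply: addsmxS; rewrite ?hPQ ?smx_line.
rewrite -(projm_perp S1).
apply: submx_trans (submxMr _ S2) _.
rewrite addsmxMr addsmx_sub projm_N // sub0mx /= projm_row.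
exact: submx_refl.
Qed.


Lemma T1 d (M : Lstruct d) (hM : PQM_model M) y (a b N : 'rV[CC]_d) :
  N != 0 -> ip a b * ip N N = ip a N * ip N b ->
  rel_ M y (lineS a) -> rel_ M y (lineS b) -> rel_ M y (lineS N).
Proof.
move=> nz hc ra rb.
set Q := sperp (lineS N).
set ka := (ip N N)^-1 * ip a N.
set kb := (ip N N)^-1 * ip b N.
have ra' : rel_ M (pi_ M Q y) (lineS (a - ka *: N)).
  apply: (ax_up hM (ax_pi hM Q ra)); rewrite smx_line; exact: sasaki_line_bound.
have rb' : rel_ M (pi_ M Q y) (lineS (b - kb *: N)).
  apply: (ax_up hM (ax_pi hM Q rb)); rewrite smx_line; exact: sasaki_line_bound.
have nN : ip N N != 0 by rewrite ip_eq0.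
have hip : ip (a - ka *: N) (b - kb *: N) = 0.
  rewrite ipBl !ipBr !ipZl !ipZr /kb rmorphM /= -ipC.
  rewrite fmorphV /= ip_real /ka.
  have -> : ip a b = ip a N * ip N b / ip N N.
    by rewrite -hc mulfK.
  field; exact: nN.
have rz : rel_ M (pi_ M Q y) (sbot d).
  apply: (orth_bot hM ra' rb').
  by rewrite smx_line (perp_eqmx (smx_line _)) sub_perp_row hip.
have := ax_pibot hM rz => r; apply: (ax_up hM r).
rewrite smx_line smx_perp (perp_eqmx (smx_perp _)) (perp_eqmx (perp_eqmx (smx_line _))) perpK.
exact: submx_refl.
Qed.


Notation RR := Rdefinitions.R.
Definition rc (x : RR) : CC := (x%:C)%C.
Lemma rcJ x : (rc x)^* = rc x.
Proof. by apply/CrealP; rewrite complex_real. Qed.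
Lemma rcD x y : rc (x + y) = rc x + rc y. Proof. exact: rmorphD. Qed.
Lemma rcB x y : rc (x - y) = rc x - rc y. Proof. exact: rmorphB. Qed.
Lemma rcM x y : rc (x * y) = rc x * rc y. Proof. exact: rmorphM. Qed.
Lemma rcV x : rc (x^-1) = (rc x)^-1. Proof. exact: fmorphV. Qed.
Lemma rc1 : rc 1 = 1. Proof. exact: rmorph1. Qed.
Lemma rc0 : rc 0 = 0. Proof. exact: rmorph0. Qed.
Lemma rcN x : rc (- x) = - rc x. Proof. exact: rmorphN. Qed.
Lemma rcX x n : rc (x ^+ n) = rc x ^+ n. Proof. exact: rmorphXn. Qed.
Lemma rc_inj x y : rc x = rc y -> x = y. Proof. exact: complexI. Qed.
Lemma rc_eq0 x : (rc x == 0) = (x == 0).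
Proof. by apply/eqP/eqP => [h|->]; [apply: rc_inj; rewrite h rc0 | exact: rc0]. Qed.
Lemma rc_nat n : rc n%:R = n%:R. Proof. exact: rmorph_nat. Qed.

Definition rcE := (rcD, rcB, rcM, rcV, rc1, rc0, rcN, rcX, rc_nat).


Definition Vc d (a b w : 'rV[CC]_d) (c x y g : RR) : 'rV[CC]_d :=
  rc ((x - c * y) / (1 - c ^+ 2)) *: a + rc ((y - c * x) / (1 - c ^+ 2)) *: b + rc g *: w.

Lemma ip_Vc d (a b w : 'rV[CC]_d) (c : RR) :
  ip a a = 1 -> ip b b = 1 -> ip w w = 1 -> ip a b = rc c -> ip a w = 0 -> ip b w = 0 ->
  1 - c ^+ 2 != 0 ->
  forall x1 y1 g1 x2 y2 g2,
  ip (Vc a b w c x1 y1 g1) (Vc a b w c x2 y2 g2) =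
    rc ((x1 * x2 + y1 * y2 - c * (x1 * y2 + y1 * x2)) / (1 - c ^+ 2) + g1 * g2).
Proof.
move=> haa hbb hww hab haw hbw hc x1 y1 g1 x2 y2 g2.
have hba : ip b a = rc c by rewrite ipC hab rcJ.
have hwa : ip w a = 0 by rewrite ipC haw conjC0.
have hwb : ip w b = 0 by rewrite ipC hbw conjC0.
rewrite /Vc !ipDl !ipDr !ipZl !ipZr !rcJ haa hbb hww hab hba haw hwa hbw hwb.
have hc' : 1 - rc c ^+ 2 != 0 by rewrite -rc1 -rcX -rcB rc_eq0.
rewrite !rcE; field; exact: hc'.
Qed.

Lemma ip_aVc d (a b w : 'rV[CC]_d) (c : RR) :
  ip a a = 1 -> ip b b = 1 -> ip w w = 1 -> ip a b = rc c -> ip a w = 0 -> ip b w = 0 ->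
  1 - c ^+ 2 != 0 ->
  forall x y g, ip a (Vc a b w c x y g) = rc x /\ ip (Vc a b w c x y g) b = rc y.
Proof.
move=> haa hbb hww hab haw hbw hc x y g.
have hba : ip b a = rc c by rewrite ipC hab rcJ.
have hwa : ip w a = 0 by rewrite ipC haw conjC0.
have hwb : ip w b = 0 by rewrite ipC hbw conjC0.
have hc' : 1 - rc c ^+ 2 != 0 by rewrite -rc1 -rcX -rcB rc_eq0.
rewrite /Vc !ipDl !ipDr !ipZl !ipZr !rcJ haa hbb hab ?hba haw ?hwb ?hwa.
by split; rewrite !rcE; field; exact: hc'.
Qed.

Lemma sqrt_sq (r : RR) : 0 <= r -> Num.sqrt r * Num.sqrt r = r.
Proof. by move=> h; rewrite -expr2 sqr_sqrtr. Qed.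

Lemma ip_nz d (N : 'rV[CC]_d) : ip N N = 1 -> N != 0.
Proof. by move=> h; rewrite -ip_eq0 h oner_eq0. Qed.

Lemma final_step d (M : Lstruct d) (hM : PQM_model M) y (a b w : 'rV[CC]_d) (c : RR) :
  ip a a = 1 -> ip b b = 1 -> ip w w = 1 -> ip a b = rc c -> ip a w = 0 -> ip b w = 0 ->
  0 < c -> 3 * c <= 1 ->
  rel_ M y (lineS a) -> rel_ M y (lineS b) -> rel_ M y (sbot d).
Proof.
move=> haa hbb hww hab haw hbw c0 c3 ra rb.
have hc2 : 0 < 1 - c ^+ 2 by rewrite expr2; nra.
have hc : 1 - c ^+ 2 != 0 by rewrite gt_eqF.
have hc1 : 1 - c != 0 by rewrite gt_eqF //; lra.
have hc1' : 1 + c != 0 by rewrite gt_eqF //; lra.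
set s1 := Num.sqrt (1 + c); set s2 := Num.sqrt (1 - 3 * c).
have hs1 : s1 * s1 = 1 + c by apply: sqrt_sq; lra.
have hs2 : s2 * s2 = 1 - 3 * c by apply: sqrt_sq; lra.
set x := (s1 + s2) / 2; set yv := (s1 - s2) / 2.
have hxy : x * yv = c.
  have -> : x * yv = (s1 * s1 - s2 * s2) / 4 by rewrite /x /yv; field.
  by rewrite hs1 hs2; field.
have hxx : x * x + yv * yv = 1 - c.
  have -> : x * x + yv * yv = (s1 * s1 + s2 * s2) / 2 by rewrite /x /yv; field.
  by rewrite hs1 hs2; field.
set g := Num.sqrt (c / (1 - c)).
have hg : g * g = c / (1 - c) by apply: sqrt_sq; apply: divr_ge0; lra.
have ipV := ip_Vc haa hbb hww hab haw hbw hc.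
have [ha1 h1b] := ip_aVc haa hbb hww hab haw hbw hc x yv g.
have [ha2 h2b] := ip_aVc haa hbb hww hab haw hbw hc yv x (- g).
have hn1 : ip (Vc a b w c x yv g) (Vc a b w c x yv g) = 1.
  rewrite ipV -rc1; congr rc.
  rewrite hxx (mulrC yv x) hxy hg; field; rewrite hc hc1 //.
have hn2 : ip (Vc a b w c yv x (- g)) (Vc a b w c yv x (- g)) = 1.
  rewrite ipV -rc1; congr rc.
  rewrite mulrNN (addrC (yv * yv)) hxx (mulrC yv x) hxy hg; field; rewrite hc hc1 //.
have h12 : ip (Vc a b w c x yv g) (Vc a b w c yv x (- g)) = 0.
  rewrite ipV -rc0; congr rc.
  rewrite mulrN hg (mulrC yv x) hxy hxx; field; rewrite hc hc1 //.
have r1 : rel_ M y (lineS (Vc a b w c x yv g)).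
  apply: (T1 hM _ _ ra rb); first exact: ip_nz.
  by rewrite hab hn1 ha1 h1b -rcM hxy mulr1.
have r2 : rel_ M y (lineS (Vc a b w c yv x (- g))).
  apply: (T1 hM _ _ ra rb); first exact: ip_nz.
  by rewrite hab hn2 ha2 h2b -rcM (mulrC yv x) hxy mulr1.
apply: (orth_bot hM r1 r2).
by rewrite smx_line (perp_eqmx (smx_line _)) sub_perp_row h12.
Qed.

Lemma iter_step d (M : Lstruct d) (hM : PQM_model M) y (a b w : 'rV[CC]_d) (c : RR) :
  ip a a = 1 -> ip b b = 1 -> ip w w = 1 -> ip a b = rc c -> ip a w = 0 -> ip b w = 0 ->
  1 < 3 * c -> c < 1 ->
  rel_ M y (lineS a) -> rel_ M y (lineS b) ->
  exists N1 N2 : 'rV[CC]_d, [/\ ip N1 N1 = 1, ip N2 N2 = 1,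
     ip N1 N2 = rc ((3 * c - 1) / (1 + c)), rel_ M y (lineS N1) & rel_ M y (lineS N2)].
Proof.
move=> haa hbb hww hab haw hbw c3 c1 ra rb.
have hc2 : 0 < 1 - c ^+ 2 by rewrite expr2; nra.
have hc : 1 - c ^+ 2 != 0 by rewrite gt_eqF.
have hc1 : 1 - c != 0 by rewrite gt_eqF //; lra.
have hc1' : 1 + c != 0 by rewrite gt_eqF //; lra.
set s := Num.sqrt c.
have hs : s * s = c by apply: sqrt_sq; lra.
set t := Num.sqrt ((1 - c) / (1 + c)).
have ht : t * t = (1 - c) / (1 + c) by apply: sqrt_sq; apply: divr_ge0; lra.
have ipV := ip_Vc haa hbb hww hab haw hbw hc.
have [ha1 h1b] := ip_aVc haa hbb hww hab haw hbw hc s s t.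
have [ha2 h2b] := ip_aVc haa hbb hww hab haw hbw hc s s (- t).
have hn1 : ip (Vc a b w c s s t) (Vc a b w c s s t) = 1.
  rewrite ipV -rc1; congr rc.
  rewrite hs ht; field; rewrite hc hc1' //.
have hn2 : ip (Vc a b w c s s (- t)) (Vc a b w c s s (- t)) = 1.
  rewrite ipV -rc1; congr rc.
  rewrite mulrNN hs ht; field; rewrite hc hc1' //.
exists (Vc a b w c s s t), (Vc a b w c s s (- t)); split => //.
- rewrite ipV; congr rc.
  rewrite mulrN hs ht; field; rewrite hc hc1' //.
- apply: (T1 hM _ _ ra rb); first exact: ip_nz.
  by rewrite hab hn1 ha1 h1b -rcM hs mulr1.
- apply: (T1 hM _ _ ra rb); first exact: ip_nz.
  by rewrite hab hn2 ha2 h2b -rcM hs mulr1.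
Qed.


Lemma normalize n (u : 'rV[CC]_n) : u != 0 ->
  exists2 u1 : 'rV[CC]_n, ip u1 u1 = 1 & (u1 :=: u)%MS.
Proof.
move=> nz; set k := (sqrtC (ip u u))^-1.
have hpos : 0 < ip u u by rewrite lt_def ip_eq0 nz ip_ge0.
have sq0 : sqrtC (ip u u) != 0 by rewrite sqrtC_eq0 ip_eq0.
have kJ : k^* = k.
  apply/CrealP; rewrite rpredV; apply: ger0_real; rewrite sqrtC_ge0 ip_ge0 //.
exists (k *: u); last by apply: eqmx_scale; rewrite invr_eq0.
rewrite ipZl ipZr kJ mulrA /k -invfM -expr2 sqrtCK mulVf //.
by rewrite ip_eq0.
Qed.

Lemma exists_w d (hd : (3 <= d)%N) (a b : 'rV[CC]_d) :
  exists w : 'rV[CC]_d, [/\ ip w w = 1, ip a w = 0 & ip b w = 0].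
Proof.
set K := perpm (a + b)%MS.
have rK : (1 <= \rank K)%N.
  rewrite rank_perp; have := (mxrank_adds_leqif a b).1.
  have := rank_leq_row a; have := rank_leq_row b; lia.
have [i ni] : exists i, row i K != 0 by apply: nonzero_row; rewrite -mxrank_eq0 -lt0n.
have [w hw ew] := normalize ni.
have sK : (w <= K)%MS by rewrite ew row_sub.
have ha : (w <= perpm a)%MS by apply: submx_trans sK (perpS (addsmxSl _ _)).
have hb : (w <= perpm b)%MS by apply: submx_trans sK (perpS (addsmxSr _ _)).
exists w; split => //.
  by rewrite ipC; move: ha; rewrite sub_perp_row => /eqP ->; rewrite conjC0.
by rewrite ipC; move: hb; rewrite sub_perp_row => /eqP ->; rewrite conjC0.
Qed.

Lemma iterL d (M : Lstruct d) (hM : PQM_model M) (hd : (3 <= d)%N) :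
  forall (n : nat) y (a b : 'rV[CC]_d) (c : RR),
  ip a a = 1 -> ip b b = 1 -> ip a b = rc c -> 0 < c -> c < 1 ->
  2 <= (n%:R + 3) * (1 - c) ->
  rel_ M y (lineS a) -> rel_ M y (lineS b) -> rel_ M y (sbot d).
Proof.
elim=> [|n IH] y a b c haa hbb hab c0 c1 hn ra rb;
  have [w [hww haw hbw]] := exists_w hd a b.
  apply: (final_step hM haa hbb hww hab haw hbw c0 _ ra rb).
  move: hn; rewrite add0r; lra.
have [c3|c3] := lerP (3 * c) 1.
  exact: (final_step hM haa hbb hww hab haw hbw c0 c3 ra rb).
have [N1 [N2 [h1 h2 h12 r1 r2]]] := iter_step hM haa hbb hww hab haw hbw c3 c1 ra rb.
have hc1 : 0 < 1 + c by lra.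
apply: (IH y N1 N2 ((3 * c - 1) / (1 + c)) h1 h2 h12 _ _ _ r1 r2).
- by apply: divr_gt0; lra.
- by rewrite ltr_pdivrMr //; lra.
- have -> : (n%:R + 3) * (1 - (3 * c - 1) / (1 + c)) = 2 * ((n%:R + 3) * (1 - c)) / (1 + c).
    by field; rewrite gt_eqF.
  rewrite ler_pdivlMr //; move: hn; rewrite -natr1; nra.
Qed.

Lemma lineS_eq d (x y : 'rV[CC]_d) : (x :=: y)%MS -> lineS x = lineS y.
Proof. by move=> e; rewrite /lineS (eq_genmx e). Qed.

Lemma L1 d (M : Lstruct d) (hM : PQM_model M) (hd : (3 <= d)%N) y (u v : 'rV[CC]_d) :
  rel_ M y (lineS u) -> rel_ M y (lineS v) -> u != 0 -> ~~ (v <= u)%MS -> rel_ M y (sbot d).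
Proof.
move=> ru rv nu nvu.
have nv : v != 0 by apply: contraNneq nvu => ->; exact: sub0mx.
have [u1 hu1 eu1] := normalize nu.
have [v0 hv0 ev0] := normalize nv.
have ru1 : rel_ M y (lineS u1) by rewrite (lineS_eq eu1).
have rv0 : rel_ M y (lineS v0) by rewrite (lineS_eq ev0).
set g := ip u1 v0.
have [g0|gn0] := eqVneq g 0.
  apply: (orth_bot hM ru1 rv0).
  by rewrite smx_line (perp_eqmx (smx_line _)) sub_perp_row -/g g0.
have ng0 : `|g| != 0 by rewrite normr_eq0.
set v1 := (g / `|g|) *: v0.
have ev1 : (v1 :=: v0)%MS by apply: eqmx_scale; rewrite mulf_neq0 // invr_eq0.
have rv1 : rel_ M y (lineS v1) by rewrite (lineS_eq ev1).
have hab : ip u1 v1 = `|g|.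
  rewrite ipZr rmorphM /= fmorphV /= conj_normC -/g.
  by rewrite mulrAC -normCKC expr2 mulfK.
have hbb : ip v1 v1 = 1.
  rewrite ipZl ipZr hv0 mulr1 rmorphM /= fmorphV /= conj_normC.
  rewrite mulrACA -normCK -invfM -expr2 mulfV //.
  by rewrite expf_neq0.
clearbody v1.
set c := complex.Re `|g|.
have hc : rc c = `|g| by rewrite /rc /c RRe_real // normr_real.
have c0 : 0 < c.
  have : 0 < rc c by rewrite hc normr_gt0.
  by rewrite -rc0 /rc ltcR.
have hab' : ip u1 v1 = rc c by rewrite hc.
have c1 : c < 1.
  set z := v1 - rc c *: u1.
  have hba : ip v1 u1 = rc c by rewrite ipC hab' rcJ.
  have hz : ip z z = rc (1 - c ^+ 2).
    rewrite /z ipBl !ipBr !ipZl !ipZr rcJ hbb hba hab' hu1 !rcE; ring.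
  have nz : z != 0.
    apply/negP => /eqP z0; apply: (negP nvu).
    have : v1 = rc c *: u1 by apply/eqP; rewrite -subr_eq0 -/z z0.
    move=> e; rewrite -ev0 -ev1 e -eu1; exact: scalemx_sub (submx_refl _).
  have : 0 < ip z z by rewrite lt_def ip_eq0 nz ip_ge0.
  rewrite hz -rc0 /rc ltcR expr2 => h; nra.
have [n hn] : exists n : nat, 2 <= (n%:R + 3) * (1 - c).
  have h0 : 0 <= 2 / (1 - c) by apply: divr_ge0; lra.
  exists (Num.bound (2 / (1 - c))).
  have := archi_boundP h0.
  rewrite ltr_pdivrMr; last lra.
  move: (Num.bound _) => k h.
  have hk : (0 <= (k%:R : RR)) by exact: ler0n.
  nra.
exact: (iterL hM hd hu1 hbb hab' c0 c1 hn ru1 rv1).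
Qed.


Lemma min_rank d (M : Lstruct d) (m : dom M) :
  forall n p, (\rank (smx p) <= n)%N -> rel_ M m p ->
  exists k, rel_ M m k /\ forall q, rel_ M m q -> (\rank (smx k) <= \rank (smx q))%N.
Proof.
elim=> [|n IH] p hp rp.
  exists p; split=> // q _; by move: hp; rewrite leqn0 => /eqP ->.
case: (classic (exists q, rel_ M m q /\ (\rank (smx q) < \rank (smx p))%N)).
  by case=> q [rq hq]; apply: (IH q) => //; rewrite -ltnS (leq_trans hq).
move=> hn; exists p; split=> // q rq; rewrite leqNgt; apply/negP => h.
by apply: hn; exists q.
Qed.

Lemma main_from_meet d (M : Lstruct d) (hM : PQM_model M) :
  (forall x p q, rel_ M x p -> rel_ M x q -> rel_ M x (smeet p q)) ->
  exists kappa : dom M -> subsp d,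
    forall (m : dom M) (p : subsp d), filt m p <-> sle (kappa m) p.
Proof.
move=> hmeet.
have H : forall m : dom M, exists k, forall p, rel_ M m p <-> sle k p.
  move=> m; have [k [rk hk]] := min_rank (leqnn _) (ax_top hM m).
  exists k => p; split; last by move=> s; exact: (ax_up hM rk s).
  move=> rp; have rkp := hmeet _ _ _ rk rp.
  have hle : (smx (smeet k p) <= smx k)%MS by rewrite smx_meet capmxSl.
  have skm : (smx k <= smx (smeet k p))%MS.
    rewrite -(mxrank_leqif_sup hle).2 eqn_leq (mxrankS hle) /=; exact: (hk _ rkp).
  by rewrite /sle (submx_trans skm) // smx_meet capmxSr.
exists (fun m => proj1_sig (constructive_indefinite_description _ (H m))).
move=> m p; rewrite /filt; case: constructive_indefinite_description => k hk /=.
exact: hk.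
Qed.


Lemma rank_add_row n m (c : 'M[CC]_(m, n)) (r : 'rV[CC]_n) :
  ~~ (r <= c)%MS -> \rank (c + r)%MS = (\rank c).+1.
Proof.
move=> nr; apply/eqP; rewrite eqn_leq; apply/andP; split.
  have := (mxrank_adds_leqif c r).1.
  move/leq_trans; apply; rewrite -[X in (_ <= X)%N]addn1 leq_add2l; exact: rank_leq_row.
have : (c < c + r)%MS.
  rewrite ltmxE addsmxSl /=; apply/negP => h; apply: (negP nr).
  exact: submx_trans (addsmxSr _ _) h.
by rewrite ltmxErank => /andP[_].
Qed.

Lemma chain d (M : Lstruct d) (hM : PQM_model M)
  (S : forall x c e, rel_ M x c -> rel_ M x e ->
        (\rank (smx c :&: smx e) + 1 = \rank (smx c))%N -> rel_ M x (smeet c e))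
  x (a b : subsp d) : rel_ M x a -> rel_ M x b ->
  forall k (c : 'M[CC]_d), (smx a :&: smx b <= c)%MS -> (c <= smx a)%MS ->
  (\rank (smx a) - \rank c = k)%N -> rel_ M x (mkS c).
Proof.
move=> ra rb; elim=> [|k IH] c habc hca hk.
  have e : (c == smx a)%MS.
    by rewrite -(mxrank_leqif_eq hca); apply/eqP; move/eqP: hk; rewrite subn_eq0 => h; apply/eqP; rewrite eqn_leq h mxrankS.
  by rewrite (mkS_eq e) smxK.
have hlt : (\rank c < \rank (smx a))%N.
  by rewrite -subn_gt0 hk.
have : ~~ (smx a <= c)%MS.
  by apply/negP => h; move: hlt; rewrite ltnNge mxrankS.
case/row_subPn => i ni.
set c2 := (c + row i (smx a))%MS.
have rc2 := rank_add_row ni.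
have r2 : rel_ M x (mkS c2).
  apply: IH.
  - exact: submx_trans habc (addsmxSl _ _).
  - by rewrite addsmx_sub hca row_sub.
  - rewrite /c2 rc2 subnS hk //.
have re : rel_ M x (mkS (c + smx b)%MS).
  by apply: (ax_upA hM rb); rewrite addsmxSr.
have hmod : ((smx (mkS c2)) :&: smx (mkS (c + smx b)%MS) :=: c)%MS.
  apply: eqmx_trans (cap_eqmx (smxE _) (smxE _)) _.
  rewrite addsmxC; apply: eqmx_trans (eqmx_sym (matrix_modr _ _)) _.
    exact: addsmxSl.
  apply/eqmx_sym/eqmxP; rewrite addsmx_sub submx_refl andbT.
  rewrite addsmxSr /= (submx_trans _ habc) // capmxS // addsmx_sub hca row_sub.
  by []. have := S _ _ _ r2 re _.
rewrite hmod smxE rc2 addn1 => /(_ erefl) r.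
apply: (ax_up hM r); rewrite smx_meet hmod smxE; exact: submx_refl.
Qed.



Theorem mainTheorem10 (d : nat) (hd : (3 <= d)%N) (M : Lstruct d) (hM : PQM_model M) :
  exists kappa : dom M -> subsp d,
    forall (m : dom M) (p : subsp d), filt m p <-> sle (kappa m) p.
Proof.
apply: (main_from_meet hM) => x a b ra rb.
have S := step_from_L1 hM (L1 hM hd).
exact: (chain hM S ra rb (submx_refl _) (capmxSl _ _) erefl).
Qed.
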